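(* Let $f:\mathbb{R}^d\to\mathbb{R}$ satisfy the Standing Assumptions with constants $0<\mu\le L$ and $M>0$, and let $\{x_t\},\{G_t\},\{r_t\}$ be generated by General Sharpened-BFGS from some $x_0$, assuming $\nabla f(x_t)\ne0$ for all $t$ considered. Define $\xi_0=1$ and $\xi_t=\exp\!\left(2M\sum_{i=0}^{t-1}r_i\right)$ for $t\ge1$. Then for all $t\ge0$, $$\nabla^2 f(x_t)\preceq G_t\preceq \xi_t\frac{L}{\mu}\nabla^2 f(x_t).$$
   Context: Standing Assumptions: $f$ is twice differentiable, $\mu$-strongly convex and has $L$-Lipschitz gradient (so $\mu I\preceq\nabla^2f(x)\preceq LI$), and $f$ is strongly self-concordant with constant $M>0$: for all $x,y,z,w\in\mathbb{R}^d$, $\nabla^2f(y)-\nabla^2f(x)\preceq M\|y-x\|_z\nabla^2f(w)$, where $\|h\|_z:=\sqrt{h^\top\nabla^2f(z)h}$. For symmetric positive definite $A,G$ and $u\ne0$, $\mathrm{BFGS}(A,G,u):=G-\frac{Guu^\top G}{u^\top Gu}+\frac{Auu^\top A}{u^\top Au}$, and $\bar u(A,G):=\arg\max_{u\in\{e_1,\dots,e_d\}}\frac{u^\top Gu}{u^\top Au}$ (ties broken arbitrarily). General Sharpened-BFGS: set $G_0=LI$; for $t=0,1,2,\dots$: $x_{t+1}=x_t-G_t^{-1}\nabla f(x_t)$; $s_t=x_{t+1}-x_t$; $J_t=\int_0^1\nabla^2f(x_t+\tau s_t)\,d\tau$; $\bar G_t=\mathrm{BFGS}(J_t,G_t,s_t)$;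 $r_t=\|s_t\|_{x_t}$; $\hat G_t=(1+Mr_t/2)^2\bar G_t$; $\bar u=\bar u(\nabla^2f(x_{t+1}),\hat G_t)$; $G_{t+1}=\mathrm{BFGS}(\nabla^2f(x_{t+1}),\hat G_t,\bar u)$. *)

(* Defs.v *)
From HB Require Import structures.
From mathcomp Require Import all_boot all_order all_algebra.
From mathcomp Require Import all_classical all_reals all_analysis.
Set Implicit Arguments. Unset Strict Implicit. Unset Printing Implicit Defensive.
Import Order.TTheory GRing.Theory Num.Theory.
Import numFieldNormedType.Exports.
Local Open Scope ring_scope.

Section Defs.
Variables (R : realType) (d : nat).

Definition qform (A : 'M[R]_d) (u : 'cV[R]_d) : R := (u^T *m A *m u) 0 0.

Definition loewner_le (A B : 'M[R]_d) : Prop := forall u, qform A u <= qform B u.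

Definition lnorm (hf : 'cV[R]_d -> 'M[R]_d) (z h : 'cV[R]_d) : R :=
  Num.sqrt (qform (hf z) h).

Definition BFGS (A G : 'M[R]_d) (u : 'cV[R]_d) : 'M[R]_d :=
  G - (qform G u)^-1 *: (G *m u *m u^T *m G)
    + (qform A u)^-1 *: (A *m u *m u^T *m A).

Definition evec (i : 'I_d) : 'cV[R]_d := \col_j (i == j)%:R.

Definition is_ubar (A G : 'M[R]_d) (i : 'I_d) : Prop :=
  forall j : 'I_d, qform G (evec j) / qform A (evec j)
                   <= qform G (evec i) / qform A (evec i).

Definition Jint (hf : 'cV[R]_d -> 'M[R]_d) (x s : 'cV[R]_d) : 'M[R]_d :=
  \matrix_(i, j) Rintegral (@lebesgue_measure R) `[0%R, 1%R]%classic
                   (fun tau : R => hf (x + tau *: s) i j).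

Definition sbfgs_step (gf : 'cV[R]_d -> 'cV[R]_d) (hf : 'cV[R]_d -> 'M[R]_d)
  (M : R) (x : 'cV[R]_d) (G : 'M[R]_d) (x' : 'cV[R]_d) (G' : 'M[R]_d) : Prop :=
  let s := x' - x in
  let Gbar := BFGS (Jint hf x s) G s in
  let r := lnorm hf x s in
  let Ghat := (1 + M * r / 2) ^+ 2 *: Gbar in
  x' = x - invmx G *m gf x /\
  exists i : 'I_d, is_ubar (hf x') Ghat i /\ G' = BFGS (hf x') Ghat (evec i).

End Defs.

(* Main.v *)
Require Import Defs.
From HB Require Import structures.
From mathcomp Require Import all_boot all_order all_algebra.
From mathcomp Require Import all_classical all_reals all_analysis.
From mathcomp Require Import ring lra.
Set Implicit Arguments. Unset Strict Implicit. Unset Printing Implicit Defensive.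
Import Order.TTheory GRing.Theory Num.Theory.
Import numFieldNormedType.Exports.
Local Open Scope ring_scope.
Lemma lip_cont (R : realType) (g : R -> R) (K : R) :
  (forall a b, `|g a - g b| <= K * `|a - b|) -> continuous g.
Proof.
move=> Hg t; apply/cvgrPdist_lt => e e0.
have K0 : 0 <= K by have := Hg 0 1; rewrite sub0r normrN normr1 mulr1; apply: le_trans.
near=> y.
apply: (le_lt_trans (Hg t y)).
have : `|t - y| < e / (K + 1).
  near: y; apply: (@cvgr_dist_lt _ _ _ (nbhs t)) => //.
  by rewrite divr_gt0 // ltr_wpDl.
rewrite ltr_pdivlMr ?ltr_wpDl // => H.
apply: le_lt_trans H; by rewrite mulrDr mulr1 ler_wpDr // mulrC.
Unshelve. all: by end_near. Qed.
Section Int.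
Context {R : realType}.
Notation mu := (@lebesgue_measure R).
Local Notation I01 := (`[0%R, 1%R]%classic : set R).

Lemma int_cont (g : R -> R) : continuous g -> mu.-integrable I01 (EFin \o g).
Proof.
move=> Hg; apply: continuous_compact_integrable; first exact: segment_compact.
exact: continuous_subspaceT.
Qed.

Lemma mu01 : fine (mu I01) = 1.
Proof. by rewrite lebesgue_measure_itv /= lte01 oppr0 adde0. Qed.

Lemma Rint_cst (c : R) : \int[mu]_(x in I01) c = c.
Proof. by rewrite Rintegral_cst // mu01 mulr1. Qed.

Lemma Rint_id : \int[mu]_(x in I01) x = 2^-1.
Proof.
have h := @Rintegral_onemXn R 1.
have e : \int[mu]_(x in I01) x = \int[mu]_(x in I01) (1 - (1 - x)).
  by apply: eq_Rintegral => y _; rewrite subKr.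
rewrite e RintegralB //; last 2 first.
- by apply: int_cont; exact: cst_continuous.
- apply: int_cont => y; apply: continuousB; [exact: cst_continuous|exact: id].
rewrite Rint_cst.
have -> : \int[mu]_(x in I01) (1 - x) = 2^-1.
  by rewrite -h; apply: eq_Rintegral => y _; rewrite expr1.
by field.
Qed.

Lemma cont_lin (A B : R) : continuous (fun x : R => A + B * x).
Proof.
move=> y; apply: continuousD; first exact: cst_continuous.
apply: continuousM; [exact: cst_continuous| exact: id].
Qed.

Lemma Rint_lin (A B : R) : \int[mu]_(x in I01) (A + B * x) = A + B / 2.
Proof.
rewrite RintegralD //; last 2 first.
- by apply: int_cont; exact: cst_continuous.
- apply: int_cont => y; apply: continuousM; [exact: cst_continuous| exact: id].
rewrite Rint_cst RintegralZl //; last by apply: int_cont => y; exact: cvg_id.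
by rewrite Rint_id.
Qed.

Lemma Rint_le (f g : R -> R) : continuous f -> continuous g ->
  (forall x, 0 <= x <= 1 -> f x <= g x) ->
  \int[mu]_(x in I01) f x <= \int[mu]_(x in I01) g x.
Proof.
move=> cf cg fg; apply: le_Rintegral; try exact: int_cont; first exact: measurable_itv.
by move=> x /=; rewrite in_itv /=; apply: fg.
Qed.

Lemma cont_sum (I : Type) (s : seq I) (F : I -> R -> R) :
  (forall i, continuous (F i)) -> continuous (fun x => \sum_(i <- s) F i x).
Proof.
move=> cF; elim: s => [|a s IH].
  have -> : (fun x => \sum_(i <- [::]) F i x) = (fun=> 0) by apply/funext => x; rewrite big_nil.
  exact: cst_continuous.
have -> : (fun x => \sum_(i <- a :: s) F i x) = (fun x => F a x + \sum_(i <- s) F i x).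
  by apply/funext => x; rewrite big_cons.
by move=> y; apply: continuousD; [exact: cF| exact: IH].
Qed.

Lemma Rint_sum (I : Type) (s : seq I) (F : I -> R -> R) :
  (forall i, continuous (F i)) ->
  \int[mu]_(x in I01) (\sum_(i <- s) F i x) = \sum_(i <- s) \int[mu]_(x in I01) F i x.
Proof.
move=> cF; elim: s => [|a s IH].
  under eq_Rintegral do rewrite big_nil.
  by rewrite big_nil Rint_cst.
under eq_Rintegral do rewrite big_cons.
rewrite RintegralD //; last 2 first.
- exact: int_cont.
- by apply: int_cont; exact: cont_sum.
by rewrite IH big_cons.
Qed.

Lemma Rint_scal (c : R) (f : R -> R) : continuous f ->
  \int[mu]_(x in I01) (c * f x) = c * \int[mu]_(x in I01) f x.
Proof. by move=> cf; rewrite RintegralZl //; exact: int_cont. Qed.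
End Int.
Section LA.
Context {R : realType} {d : nat}.
Implicit Types (A B G : 'M[R]_d) (u v w : 'cV[R]_d).

Definition bf A u v : R := (u^T *m A *m v) 0 0.

Lemma qformE A u : qform A u = bf A u u. Proof. by []. Qed.

Lemma bf_sym A u v : A^T = A -> bf A u v = bf A v u.
Proof.
move=> sA; rewrite /bf.
have -> : (u^T *m A *m v) 0 0 = ((u^T *m A *m v)^T) 0 0 by rewrite [RHS]mxE.
by rewrite !trmx_mul trmxK sA mulmxA.
Qed.

Lemma bfDm A B u v : bf (A + B) u v = bf A u v + bf B u v.
Proof. by rewrite /bf mulmxDr mulmxDl mxE. Qed.
Lemma bfNm A u v : bf (- A) u v = - bf A u v.
Proof. by rewrite /bf mulmxN mulNmx mxE. Qed.
Lemma bfBm A B u v : bf (A - B) u v = bf A u v - bf B u v.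
Proof. by rewrite bfDm bfNm. Qed.
Lemma bfZm A k u v : bf (k *: A) u v = k * bf A u v.
Proof. by rewrite /bf -scalemxAr -scalemxAl mxE. Qed.
Lemma bfDr A u v w : bf A u (v + w) = bf A u v + bf A u w.
Proof. by rewrite /bf mulmxDr mxE. Qed.
Lemma bfZr A k u v : bf A u (k *: v) = k * bf A u v.
Proof. by rewrite /bf -scalemxAr mxE. Qed.
Lemma bfDl A u v w : bf A (u + w) v = bf A u v + bf A w v.
Proof. by rewrite /bf linearD /= !mulmxDl mxE. Qed.
Lemma bfZl A k u v : bf A (k *: u) v = k * bf A u v.
Proof. by rewrite /bf linearZ /= -!scalemxAl mxE. Qed.
Lemma bfNl A u v : bf A (- u) v = - bf A u v.
Proof. by rewrite -scaleN1r bfZl mulN1r. Qed.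
Lemma bfNr A u v : bf A u (- v) = - bf A u v.
Proof. by rewrite -scaleN1r bfZr mulN1r. Qed.

Lemma bf_rank1 A u v w : bf (A *m u *m u^T *m A) v w = bf A v u * bf A u w.
Proof.
rewrite /bf.
have -> : v^T *m (A *m u *m u^T *m A) *m w = (v^T *m A *m u) *m (u^T *m A *m w).
  by rewrite !mulmxA.
by rewrite [LHS]mxE big_ord1.
Qed.

Lemma qform_cst k u : qform (k%:M) u = k * \sum_i u i 0 ^+ 2.
Proof.
rewrite qformE /bf mul_mx_scalar -scalemxAl mxE mxE; congr (_ * _).
by apply: eq_bigr => i _; rewrite mxE expr2.
Qed.

Lemma sumsq_gt0 u : u != 0 -> 0 < \sum_i u i 0 ^+ 2.
Proof.
move=> u0; rewrite lt_def sumr_ge0 ?andbT; last by move=> i _; exact: sqr_ge0.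
apply: contra u0 => /eqP H; apply/eqP/matrixP => i j.
rewrite (ord1 j) mxE; apply/eqP; rewrite -sqrf_eq0.
move/eqP: H; rewrite psumr_eq0 => [/allP /(_ i (mem_index_enum i))|]; last by move=> k _; exact: sqr_ge0.
by move/implyP => /(_ isT).
Qed.


Lemma qform_lin A u v (a : R) : A^T = A ->
  qform A (v - a *: u) = qform A v - 2 * a * bf A v u + a ^+ 2 * qform A u.
Proof.
move=> sA; rewrite !qformE bfDl !bfDr !bfNl !bfNr !bfZl !bfZr (bf_sym u v sA).
by rewrite expr2; ring.
Qed.

Lemma qform_BFGS A G u v : A^T = A -> G^T = G ->
  qform (BFGS A G u) v = qform G v - bf G v u ^+ 2 / qform G u
                           + bf A v u ^+ 2 / qform A u.
Proof.
move=> sA sG; rewrite /BFGS !qformE bfDm bfBm !bfZm !bf_rank1.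
rewrite (bf_sym u v sA) (bf_sym u v sG) -!qformE.
by rewrite !expr2 ![_^-1 * _]mulrC.
Qed.

Lemma BFGS_sym A G u : A^T = A -> G^T = G -> (BFGS A G u)^T = BFGS A G u.
Proof.
move=> sA sG; rewrite /BFGS linearD linearB /= !linearZ /= !trmx_mul !trmxK sA sG.
by rewrite !mulmxA.
Qed.

Lemma proj_mono G1 G2 u v : G1^T = G1 -> G2^T = G2 ->
  0 < qform G1 u -> 0 < qform G2 u -> loewner_le G1 G2 ->
  qform G1 v - bf G1 v u ^+ 2 / qform G1 u <= qform G2 v - bf G2 v u ^+ 2 / qform G2 u.
Proof.
move=> s1 s2 a1 a2 H.
set al := bf G2 v u / qform G2 u.
have := H (v - al *: u); rewrite !qform_lin //.
have -> : qform G2 v - 2 * al * bf G2 v u + al ^+ 2 * qform G2 u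
          = qform G2 v - bf G2 v u ^+ 2 / qform G2 u.
  rewrite /al; field; exact: lt0r_neq0.
apply: le_trans.
set b := bf G1 v u; set a := qform G1 u.
have e : b ^+ 2 / a = (al * a - b) ^+ 2 / a + (2 * al * b - al ^+ 2 * a).
  by rewrite /a; field; exact: lt0r_neq0.
rewrite e; set X := (al * a - b) ^+ 2 / a.
have X0 : 0 <= X by rewrite divr_ge0 ?sqr_ge0 // ltW.
move: X0; generalize X (qform G1 v) (2 * al * b) (al ^+ 2 * a) => ? ? ? ? ?; lra.
Qed.


Lemma qformZm A k u : qform (k *: A) u = k * qform A u.
Proof. exact: bfZm. Qed.

Lemma symZ A k : A^T = A -> (k *: A)^T = k *: A.
Proof. by move=> sA; rewrite linearZ /= sA. Qed.

Lemma bfgs_lower_c A G u c : A^T = A -> G^T = G ->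
  0 < qform A u -> 0 < qform G u -> 1 <= c -> loewner_le A (c *: G) ->
  loewner_le A (c *: BFGS A G u).
Proof.
move=> sA sG aA aG c1 H v.
have c0 : 0 < c by apply: lt_le_trans c1.
have := proj_mono v sA (symZ c sG) aA _ H.
rewrite qformZm mulr_gt0 // => /(_ isT).
rewrite qformZm bfZm qformZm qform_BFGS //.
have -> : (c * bf G v u) ^+ 2 / (c * qform G u) = c * (bf G v u ^+ 2 / qform G u).
  by field; apply/andP; split; exact: lt0r_neq0.
have Y0 : 0 <= bf A v u ^+ 2 / qform A u by rewrite divr_ge0 ?sqr_ge0 // ltW.
have h : 0 <= (c - 1) * (bf A v u ^+ 2 / qform A u) by rewrite mulr_ge0 // subr_ge0.
move: h Y0; generalize (bf A v u ^+ 2 / qform A u) (bf G v u ^+ 2 / qform G u)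
  (qform A v) (qform G v) => Y Z a g h Y0 H1.
rewrite mulrDr mulrBr; lra.
Qed.

Lemma bfgs_upper A G u e : A^T = A -> G^T = G ->
  0 < qform A u -> 0 < qform G u -> 1 <= e -> loewner_le G (e *: A) ->
  loewner_le (BFGS A G u) (e *: A).
Proof.
move=> sA sG aA aG e1 H v.
have e0 : 0 < e by apply: lt_le_trans e1.
have := proj_mono v sG (symZ e sA) aG _ H.
rewrite qformZm mulr_gt0 // => /(_ isT).
rewrite !qformE !bfZm -!qformE qform_BFGS //.
have -> : (e * bf A v u) ^+ 2 / (e * qform A u) = e * (bf A v u ^+ 2 / qform A u).
  by field; apply/andP; split; exact: lt0r_neq0.
have Y0 : 0 <= bf A v u ^+ 2 / qform A u by rewrite divr_ge0 ?sqr_ge0 // ltW.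
have h : 0 <= (e - 1) * (bf A v u ^+ 2 / qform A u) by rewrite mulr_ge0 // subr_ge0.
move: h Y0; generalize (bf A v u ^+ 2 / qform A u) (bf G v u ^+ 2 / qform G u)
  (qform A v) (qform G v) => Y Z a g h Y0 H1.
rewrite mulrBl mul1r in h; lra.
Qed.

End LA.

Section SC.
Context {R : realType} {d : nat}.
Variables (hf : 'cV[R]_d -> 'M[R]_d) (M : R).
Hypothesis Hsym : forall y, (hf y)^T = hf y.
Hypothesis HSC : forall y z w v, loewner_le (hf z - hf y)
                              ((M * lnorm hf w (z - y)) *: hf v).
Hypothesis M0 : 0 <= M.
Notation mu := (@lebesgue_measure R).

Lemma le_of_eq (a b : R) : a = b -> a <= b. Proof. by move->. Qed.

Lemma qformZv (A : 'M[R]_d) k (u : 'cV[R]_d) : qform A (k *: u) = k ^+ 2 * qform A u.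
Proof. by rewrite !qformE bfZl bfZr mulrA expr2. Qed.

Lemma lnormZ (w : 'cV[R]_d) k h : lnorm hf w (k *: h) = `|k| * lnorm hf w h.
Proof. by rewrite /lnorm qformZv sqrtrM ?sqr_ge0 // sqrtr_sqr. Qed.

Lemma lnorm_ge0 (w h : 'cV[R]_d) : 0 <= lnorm hf w h.
Proof. exact: sqrtr_ge0. Qed.

Lemma SCq (y z w v u : 'cV[R]_d) :
  qform (hf z) u - qform (hf y) u <= M * lnorm hf w (z - y) * qform (hf v) u.
Proof. by have := HSC y z w v u; rewrite !qformE bfBm bfZm. Qed.

Lemma cont_mulc (f : R -> R) (c : R) : continuous f -> continuous (fun t => c * f t).
Proof. by move=> cf t; apply: cvgM; [exact: cvg_cst| exact: cf]. Qed.
Lemma cont_mulcr (f : R -> R) (c : R) : continuous f -> continuous (fun t => f t * c).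
Proof. by move=> cf t; apply: cvgM; [exact: cf| exact: cvg_cst]. Qed.

Variables (x s : 'cV[R]_d).
Let r := lnorm hf x s.
Let Q u (t : R) := qform (hf (x + t *: s)) u.

Lemma Q_lip u a b : `|Q u a - Q u b| <= (M * r * qform (hf x) u) * `|a - b|.
Proof.
have e : forall a b, (x + a *: s) - (x + b *: s) = (a - b) *: s.
  by move=> a' b'; rewrite scalerBl opprD addrACA subrr add0r.
have h1 := SCq (x + b *: s) (x + a *: s) x x u.
have h2 := SCq (x + a *: s) (x + b *: s) x x u.
rewrite e lnormZ in h1; rewrite e lnormZ distrC in h2.
rewrite /Q ler_norml; apply/andP; split.
- rewrite lerNl opprB; apply: le_trans h2 _.
  by rewrite -/r; apply: le_of_eq; ring.
- by apply: le_trans h1 _; rewrite -/r; apply: le_of_eq; ring.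
Qed.

Lemma Q_cont u : continuous (Q u).
Proof. exact: lip_cont (Q_lip u). Qed.


Lemma evec_delta (i : 'I_d) : @evec R d i = delta_mx i 0.
Proof. by apply/matrixP => a b; rewrite !mxE (ord1 b) eqxx andbT eq_sym. Qed.

Lemma bf_entry (A : 'M[R]_d) (i j : 'I_d) : bf A ((@evec R d i)) ((@evec R d j)) = A i j.
Proof. by rewrite /bf !evec_delta trmx_delta -rowE -colE !mxE. Qed.

Lemma polar (A : 'M[R]_d) (a b : 'cV[R]_d) : A^T = A ->
  bf A a b = (qform A (a + b) - qform A (a - b)) / 4.
Proof.
move=> sA; rewrite !qformE !bfDl !bfDr !bfNl !bfNr (bf_sym b a sA).
by field.
Qed.

Lemma entry_cont (i j : 'I_d) : continuous (fun t : R => hf (x + t *: s) i j).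
Proof.
have -> : (fun t : R => hf (x + t *: s) i j) =
   (fun t : R => (Q ((@evec R d i) + (@evec R d j)) t - Q ((@evec R d i) - (@evec R d j)) t) * 4^-1).
  by apply/funext => t; rewrite -bf_entry polar.
apply: cont_mulcr => t.
by apply: continuousB; apply: Q_cont.
Qed.

Lemma qform_sum (A : 'M[R]_d) (u : 'cV[R]_d) :
  qform A u = \sum_k \sum_l u l 0 * A l k * u k 0.
Proof.
rewrite qformE /bf mxE; apply: eq_bigr => k _; rewrite mxE big_distrl /=.
by apply: eq_bigr => l _; rewrite mxE.
Qed.

Lemma qform_J u : qform (Jint hf x s) u =
  \int[mu]_(t in `[0%R, 1%R]%classic) Q u t.
Proof.
have E : Q u = (fun t : R => \sum_k \sum_l u l 0 * hf (x + t *: s) l k * u k 0).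
  by apply/funext => t; rewrite /Q qform_sum.
rewrite E.
have C : forall k l : 'I_d, continuous (fun t : R => u l 0 * hf (x + t *: s) l k * u k 0).
  by move=> k l; apply: cont_mulcr; apply: cont_mulc; exact: entry_cont.
rewrite (@Rint_sum R 'I_d (index_enum 'I_d) (fun (k : 'I_d) (t : R) => \sum_l u l 0 * hf (x + t *: s) l k * u k 0)); last first.
  by move=> k; apply: cont_sum => l; exact: C.
rewrite qform_sum; apply: eq_bigr => k _.
rewrite (@Rint_sum R 'I_d (index_enum 'I_d) (fun (l : 'I_d) (t : R) => u l 0 * hf (x + t *: s) l k * u k 0)) //.
apply: eq_bigr => l _.
rewrite mxE.
transitivity (\int[mu]_(t in `[0%R, 1%R]%classic) ((u l 0 * u k 0) * hf (x + t *: s) l k)); last first.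
  by apply: eq_Rintegral => t _; rewrite mulrAC.
rewrite Rint_scal; first by rewrite mulrAC.
exact: entry_cont.
Qed.

Lemma tang (a w q P : R) : 0 <= a -> 0 <= q -> -(2^-1) <= w <= 2^-1 ->
  q <= (1 + a / 2 + a * w) * P ->
  q * ((1 + a / 2)^-1 - a / (1 + a / 2) ^+ 2 * w) <= P.
Proof.
move=> a0 q0 /andP[w1 w2] H.
set c := 1 + a / 2.
have c0 : 0 < c by rewrite /c; lra.
have D0 : 0 < c + a * w.
  have : -(a / 2) <= a * w by nra.
  rewrite /c; lra.
rewrite -(ler_pM2r D0).
apply: le_trans (_ : q <= _); last by rewrite mulrC.
have -> : q * (c^-1 - a / c ^+ 2 * w) * (c + a * w) = q - q * (a * w) ^+ 2 / c ^+ 2.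
  by field; exact: lt0r_neq0.
rewrite lerBlDr lerDl; apply: mulr_ge0; first by apply: mulr_ge0 => //; exact: sqr_ge0.
by rewrite invr_ge0 sqr_ge0.
Qed.

Hypothesis Hpsd : forall y u, 0 <= qform (hf y) u.

Let c := 1 + M * r / 2.
Let I01 := (`[0%R, 1%R]%classic : set R).

Lemma r_ge0 : 0 <= r. Proof. exact: lnorm_ge0. Qed.

Lemma addKv (a b : 'cV[R]_d) : (a + b) - a = b.
Proof. by rewrite addrC addKr. Qed.

Lemma bound_J_x : loewner_le (Jint hf x s) (c *: hf x).
Proof.
move=> u; rewrite qform_J !qformE bfZm -qformE.
set q := qform (hf x) u.
apply: le_trans (_ : \int[mu]_(t in I01) (q + (M * r * q) * t) <= _).
  apply: Rint_le; [exact: Q_cont| exact: cont_lin|] => t /andP[t0 t1].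
  have := SCq x (x + t *: s) x x u; rewrite addKv lnormZ ger0_norm // -/q /Q -/r.
  have -> : M * (t * r) * q = M * r * q * t by ring.
  lra.
by rewrite Rint_lin /c; apply: le_of_eq; field.
Qed.


Lemma dxs (a b : R) : (x + a *: s) - (x + b *: s) = (a - b) *: s.
Proof. by rewrite scalerBl opprD addrACA subrr add0r. Qed.

Lemma c_gt0 : 0 < c.
Proof. have := r_ge0; rewrite /c => h; have : 0 <= M * r by exact: mulr_ge0. lra. Qed.

Lemma bound_J_y : loewner_le (Jint hf x s) (c *: hf (x + s)).
Proof.
move=> u; rewrite qform_J !qformE bfZm -qformE.
set q := qform (hf (x + s)) u.
apply: le_trans (_ : \int[mu]_(t in I01) ((q + M * r * q) + (- (M * r * q)) * t) <= _).
  apply: Rint_le; [exact: Q_cont| exact: cont_lin|] => t /andP[t0 t1].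
  have := SCq (x + 1 *: s) (x + t *: s) x (x + s) u.
  rewrite dxs lnormZ scale1r -/q /Q -/r distrC ger0_norm ?subr_ge0 //.
  have -> : M * ((1 - t) * r) * q = M * r * q - M * r * q * t by ring.
  lra.
by rewrite Rint_lin /c; apply: le_of_eq; field.
Qed.

Lemma bound_y_J : loewner_le (hf (x + s)) (c *: Jint hf x s).
Proof.
move=> u; rewrite qformZm qform_J.
set q := qform (hf (x + s)) u.
set a := M * r.
have a0 : 0 <= a by apply: mulr_ge0 => //; exact: r_ge0.
have q0 : 0 <= q by exact: Hpsd.
apply: le_trans (_ : c * \int[mu]_(t in I01) ((q / c - q * a / c ^+ 2 / 2) + (q * a / c ^+ 2) * t) <= _).
  rewrite Rint_lin; apply: le_of_eq; have := c_gt0 => c0; field; exact: lt0r_neq0.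
rewrite ler_pM2l; last exact: c_gt0.
apply: Rint_le; [exact: cont_lin| exact: Q_cont|] => t /andP[t0 t1].
have := SCq (x + t *: s) (x + 1 *: s) x (x + t *: s) u.
rewrite dxs lnormZ scale1r -/q /Q -/r ger0_norm ?subr_ge0 // => h.
have h2 : q <= (1 + a / 2 + a * (2^-1 - t)) * qform (hf (x + t *: s)) u.
  have -> : (1 + a / 2 + a * (2^-1 - t)) = 1 + M * ((1 - t) * r).
    by rewrite /a; field.
  by rewrite mulrDl mul1r mulrA; lra.
have := tang a0 q0 _ h2.
have -> : (1 + a / 2) = c by [].
have -> : q * (c^-1 - a / c ^+ 2 * (2^-1 - t)) = q / c - q * a / c ^+ 2 / 2 + q * a / c ^+ 2 * t.
  by field; exact: lt0r_neq0 c_gt0.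
apply; apply/andP; split; lra.
Qed.

Lemma bound_x_J : loewner_le (hf x) (c *: Jint hf x s).
Proof.
move=> u; rewrite qformZm qform_J.
set q := qform (hf x) u.
set a := M * r.
have a0 : 0 <= a by apply: mulr_ge0 => //; exact: r_ge0.
have q0 : 0 <= q by exact: Hpsd.
apply: le_trans (_ : c * \int[mu]_(t in I01) ((q / c + q * a / c ^+ 2 / 2) + (- (q * a / c ^+ 2)) * t) <= _).
  rewrite Rint_lin; apply: le_of_eq; have := c_gt0 => c0; field; exact: lt0r_neq0.
rewrite ler_pM2l; last exact: c_gt0.
apply: Rint_le; [exact: cont_lin| exact: Q_cont|] => t /andP[t0 t1].
have := SCq (x + t *: s) (x + 0 *: s) x (x + t *: s) u.
rewrite dxs lnormZ scale0r addr0 -/q /Q -/r sub0r normrN ger0_norm // => h.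
have h2 : q <= (1 + a / 2 + a * (t - 2^-1)) * qform (hf (x + t *: s)) u.
  have -> : (1 + a / 2 + a * (t - 2^-1)) = 1 + M * (t * r).
    by rewrite /a; field.
  by rewrite mulrDl mul1r mulrA; lra.
have := tang a0 q0 _ h2.
have -> : (1 + a / 2) = c by [].
have -> : q * (c^-1 - a / c ^+ 2 * (t - 2^-1)) = q / c + q * a / c ^+ 2 / 2 + - (q * a / c ^+ 2) * t.
  by field; exact: lt0r_neq0 c_gt0.
apply; apply/andP; split; lra.
Qed.

End SC.
Section Step.
Context {R : realType} {d : nat}.
Implicit Types (A B C : 'M[R]_d).

Lemma lo_trans A B C : loewner_le A B -> loewner_le B C -> loewner_le A C.
Proof. by move=> h1 h2 u; apply: le_trans (h1 u) (h2 u). Qed.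

Lemma lo_scale_trans A B C (k l : R) : 0 <= k ->
  loewner_le A (k *: B) -> loewner_le B (l *: C) -> loewner_le A ((k * l) *: C).
Proof.
move=> k0 h1 h2 u; apply: le_trans (h1 u) _.
rewrite !qformZm -mulrA; apply: ler_wpM2l => //.
by have := h2 u; rewrite qformZm.
Qed.

Lemma lo_scale_le A (k l : R) : k <= l -> (forall u, 0 <= qform A u) ->
  loewner_le (k *: A) (l *: A).
Proof. by move=> kl A0 u; rewrite !qformZm ler_wpM2r. Qed.

Lemma lo_refl_scale1 A B : loewner_le A B -> loewner_le A (1 *: B).
Proof. by rewrite scale1r. Qed.

Lemma evec_neq0 (i : 'I_d) : @evec R d i != 0.
Proof.
apply/negP => /eqP /matrixP /(_ i 0); rewrite !mxE eqxx /=.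
by move/eqP; rewrite oner_eq0.
Qed.

Lemma c4_le (a : R) : 0 <= a -> (1 + a / 2) ^+ 4 <= expR (2 * a).
Proof.
move=> a0; have h := expR_ge1Dx (a / 2).
have -> : 2 * a = 4%:R * (a / 2) by rewrite -mulr_natr; field. 
have a2 : 0 <= a / 2 by rewrite divr_ge0.
rewrite expRM_natl; apply: lerXn2r => //; rewrite nnegrE.
  lra.
exact: expR_ge0.
Qed.


Lemma step (gf : 'cV[R]_d -> 'cV[R]_d) (hf : 'cV[R]_d -> 'M[R]_d) (M mu : R)
  (x x' : 'cV[R]_d) (G G' : 'M[R]_d) (e : R) :
  (forall y, (hf y)^T = hf y) ->
  (forall y z w v, loewner_le (hf z - hf y) ((M * lnorm hf w (z - y)) *: hf v)) ->
  0 <= M -> 0 < mu -> (forall y, loewner_le (mu%:M) (hf y)) ->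
  sbfgs_step gf hf M x G x' G' -> gf x != 0 -> G^T = G ->
  loewner_le (hf x) G -> 1 <= e -> loewner_le G (e *: hf x) ->
  [/\ G'^T = G', loewner_le (hf x') G' &
     loewner_le G' ((e * expR (2 * M * lnorm hf x (x' - x))) *: hf x')].
Proof.
move=> Hsym HSC M0 mu0 Hmu [Ex [i [_ EG']]] gf0 sG lo1 e1 lo2.
have Hpsd : forall y u, 0 <= qform (hf y) u.
  move=> y u; apply: le_trans (Hmu y u); rewrite qform_cst.
  by apply: mulr_ge0; [exact: ltW| apply: sumr_ge0 => k _; exact: sqr_ge0].
have Hpd : forall y u, u != 0 -> 0 < qform (hf y) u.
  move=> y u u0; apply: lt_le_trans (Hmu y u); rewrite qform_cst.
  by apply: mulr_gt0 => //; exact: sumsq_gt0.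
set s := x' - x.
have Ex' : x' = x + s by rewrite /s addrC subrK.
have s0 : s != 0.
  apply/negP => /eqP s0.
  have hs : s = - (invmx G *m gf x) by rewrite /s Ex addrAC subrr add0r.
  have h0 : invmx G *m gf x = 0 by apply/eqP; rewrite -oppr_eq0 -hs s0.
  case: (boolP (G \in unitmx)) => [uG|nuG].
    by move: gf0; rewrite -(mulKVmx uG (gf x)) h0 mulmx0 eqxx.
  rewrite invmx_out ?inE // in h0.
  have := lt_le_trans (Hpd x (gf x) gf0) (lo1 (gf x)).
  by rewrite qformE /bf -mulmxA h0 mulmx0 mxE ltxx.
set r := lnorm hf x s.
set c := 1 + M * r / 2.
set J := Jint hf x s.
have r0 : 0 <= r by exact: sqrtr_ge0.
have Mr0 : 0 <= M * r by exact: mulr_ge0.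
have c1 : 1 <= c by rewrite /c; lra.
have c0 : 0 < c by lra.
have sJ : J^T = J.
  apply/matrixP => a b; rewrite !mxE; apply: eq_Rintegral => t _.
  by have := congr1 (fun A => A b a) (Hsym (x + t *: s)); rewrite mxE.
have bJx : loewner_le J (c *: hf x) by apply: bound_J_x.
have bJy : loewner_le J (c *: hf (x + s)) by apply: bound_J_y.
have byJ : loewner_le (hf (x + s)) (c *: J) by apply: bound_y_J.
have bxJ : loewner_le (hf x) (c *: J) by apply: bound_x_J.
have qJs : 0 < qform J s.
  by have := lt_le_trans (Hpd x s s0) (bxJ s); rewrite qformZm pmulr_rgt0.
have qGs : 0 < qform G s := lt_le_trans (Hpd x s s0) (lo1 s).
have JcG : loewner_le J (c *: G).
  by move=> u; apply: le_trans (bJx u) _; rewrite !qformZm ler_wpM2l // ltW.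
set Gb := BFGS J G s.
have sGb : Gb^T = Gb := BFGS_sym s sJ sG.
have L1 : loewner_le J (c *: Gb) := bfgs_lower_c sJ sG qJs qGs c1 JcG.
have L2 : loewner_le (hf (x + s)) ((c * c) *: Gb) := lo_scale_trans (ltW c0) byJ L1.
set Gh := c ^+ 2 *: Gb.
have EG2 : G' = BFGS (hf x') Gh (@evec R d i) := EG'.
clear EG'; rewrite Ex' in EG2 *.
have sGh : Gh^T = Gh := symZ _ sGb.
have pA : 0 < qform (hf (x + s)) (@evec R d i) := Hpd _ _ (evec_neq0 i).
have L3 : loewner_le (hf (x + s)) Gh by rewrite /Gh expr2.
have pG : 0 < qform Gh (@evec R d i) := lt_le_trans pA (L3 _).
have ec1 : 1 <= e * c by rewrite -[1]mul1r; apply: ler_pM => //.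
have e0 : 0 <= e by lra.
have GJ : loewner_le G ((e * c) *: J) := lo_scale_trans e0 lo2 bxJ.
have U1 : loewner_le Gb ((e * c) *: J) := bfgs_upper sJ sG qJs qGs ec1 GJ.
have U2 : loewner_le Gb ((e * c * c) *: hf (x + s)) :=
  lo_scale_trans (le_trans ler01 ec1) U1 bJy.
have U3 : loewner_le Gh ((e * expR (2 * M * r)) *: hf (x + s)).
  move=> u; rewrite /Gh !qformZm.
  apply: le_trans (_ : c ^+ 2 * (e * c * c) * qform (hf (x + s)) u <= _).
    rewrite -mulrA ler_wpM2l ?exprn_ge0 ?(ltW c0) //.
    by have := U2 u; rewrite qformZm.
  apply: ler_wpM2r; first exact: Hpsd.
  have h4 := c4_le Mr0.
  have -> : c ^+ 2 * (e * c * c) = e * c ^+ 4 by rewrite !exprS expr0; ring.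
  by rewrite -mulrA ler_wpM2l.
have eta1 : 1 <= e * expR (2 * M * r).
  rewrite -[1]mul1r; apply: ler_pM => //.
  apply: le_trans (expR_ge1Dx _); rewrite lerDl -mulrA; apply: mulr_ge0 => //.
split.
- by rewrite EG2; exact: BFGS_sym.
- rewrite EG2 -[X in loewner_le _ X]scale1r; apply: bfgs_lower_c => //.
  by rewrite scale1r.
- by rewrite EG2; apply: bfgs_upper.
Qed.


End Step.

Unset Implicit Arguments.

Theorem mainTheorem4 (R : realType) (d : nat)
  (f : 'cV[R]_d -> R) (gf : 'cV[R]_d -> 'cV[R]_d) (hf : 'cV[R]_d -> 'M[R]_d)
  (mu L M : R) (x : nat -> 'cV[R]_d) (G : nat -> 'M[R]_d) :
  0 < mu -> mu <= L -> 0 < M ->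
  (* gf is the gradient of f (Frechet) *)
  (forall y, differentiable f y /\ forall h, 'd f y h = ((gf y)^T *m h) 0 0) ->
  (* hf is the Hessian: Frechet derivative of the gradient *)
  (forall y, differentiable gf y /\ forall h, 'd gf y h = hf y *m h) ->
  (* Hessian symmetric (implied by twice differentiability) *)
  (forall y, (hf y)^T = hf y) ->
  (* mu-strong convexity and L-Lipschitz gradient, in Hessian form *)
  (forall y, loewner_le (mu%:M) (hf y) /\ loewner_le (hf y) (L%:M)) ->
  (* strong self-concordance with constant M *)
  (forall y z w v, loewner_le (hf z - hf y)
                              ((M * lnorm hf w (z - y)) *: hf v)) ->
  (* iterates of General Sharpened-BFGS *)
  G 0%N = L%:M ->
  (forall t, sbfgs_step gf hf M (x t) (G t) (x t.+1) (G t.+1)) ->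
  forall t : nat,
    (forall i, (i < t)%N -> gf (x i) != 0) ->
    let xi := expR (2 * M * \sum_(i < t) lnorm hf (x i) (x i.+1 - x i)) in
    loewner_le (hf (x t)) (G t) /\
    loewner_le (G t) ((xi * (L / mu)) *: hf (x t)).
Proof.
move=> mu0 muL M0 _ _ Hsym Hbd HSC G0 Hstep t Hgf; cbv zeta.
have Hmu : forall y, loewner_le (mu%:M) (hf y) by move=> y; case: (Hbd y).
have Lmu : 1 <= L / mu by rewrite ler_pdivlMr // mul1r.
suff : (G t)^T = G t /\ loewner_le (hf (x t)) (G t) /\
       loewner_le (G t) ((expR (2 * M * \sum_(i < t) lnorm hf (x i) (x i.+1 - x i)) * (L / mu)) *: hf (x t)) by case.
elim: t Hgf => [|t IH] Hgf.
  rewrite big_ord0 mulr0 expR0 mul1r G0; split; first by rewrite tr_scalar_mx.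
  split; first by case: (Hbd (x 0%N)).
  move=> u; rewrite qformZm.
  apply: le_trans (_ : L / mu * qform (mu%:M) u <= _); last first.
    by rewrite ler_wpM2l ?divr_ge0 ?(ltW mu0) ?(le_trans (ltW mu0) muL) //; exact: Hmu.
  by rewrite !qform_cst mulrA divfK ?lt0r_neq0.
have [sG [lo1 lo2]] : (G t)^T = G t /\ loewner_le (hf (x t)) (G t) /\
   loewner_le (G t) ((expR (2 * M * \sum_(i < t) lnorm hf (x i) (x i.+1 - x i)) * (L / mu))
      *: hf (x t)).
  by apply: IH => i it; apply: Hgf; exact: ltnW.
set S := \sum_(i < t) lnorm hf (x i) (x i.+1 - x i).
have S0 : 0 <= S by apply: sumr_ge0 => i _; exact: sqrtr_ge0.
have e1 : 1 <= expR (2 * M * S) * (L / mu).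
  rewrite -[1]mul1r; apply: ler_pM => //.
  apply: le_trans (expR_ge1Dx _); rewrite lerDl; apply: mulr_ge0 => //.
  by apply: mulr_ge0 => //; exact: ltW.
have [sG' lo1' lo2'] := step Hsym HSC (ltW M0) mu0 Hmu (Hstep t) (Hgf t (ltnSn t)) sG lo1 e1 lo2.
split => //; split => //.
rewrite big_ord_recr /= -/S.
suff -> : expR (2 * M * (S + lnorm hf (x t) (x t.+1 - x t))) * (L / mu) =
  expR (2 * M * S) * (L / mu) * expR (2 * M * lnorm hf (x t) (x t.+1 - x t)) by [].
by rewrite mulrDr expRD; ring.
Qed.
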